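(* Consider an ideal gas of $N$ identical particles with single-particle energy eigenvalues $\varepsilon_1,\varepsilon_2,\ldots$ and canonical partition function $Z(\beta,N)=\sum_E\omega(E,N)e^{-\beta E}$. Suppose that $$Z(\beta,N)=m_{(\lambda)^q}\big(e^{-\beta\varepsilon_1},e^{-\beta\varepsilon_2},\ldots\big)+\sum_{I:\ \lambda_{I,1}\le q} M^I\, m_{(\lambda)_I}\big(e^{-\beta\varepsilon_1},e^{-\beta\varepsilon_2},\ldots\big),$$ where $(\lambda)^q$ is an integer partition of $N$ with largest part $\lambda_1=q$, the sum runs over partitions $(\lambda)_I=(\lambda_{I,1},\lambda_{I,2},\ldots)$ of $N$ with largest part $\lambda_{I,1}\le q$, and each $M^I$ is a nonnegative integer. Then the maximum occupation number of the system is $q$.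
   Context: $\omega(E,N)$ denotes the number of microstates with $N$ particles and total energy $E$. The monomial symmetric function of a partition $(\lambda)=(\lambda_1,\ldots,\lambda_l)$ is $m_{(\lambda)}(x_1,x_2,\ldots)=\sum x_{i_1}^{\lambda_1}x_{i_2}^{\lambda_2}\cdots x_{i_l}^{\lambda_l}$, summed over all distinct monomials of this form with distinct indices $i_1,\ldots,i_l$. With $x_i=e^{-\beta\varepsilon_i}$, a term $m_{(\lambda)}$ counts microstates in which $\lambda_1$ particles occupy one single-particle state, $\lambda_2$ particles occupy another, and so on. The maximum occupation number is the largest number of particles that can occupy a single single-particle quantum state in some microstate counted by $\omega(E,N)$. *)

(* Defs.v *)
From mathcomp Require Import all_boot.
From mathcomp Require Import finmap.
Set Implicit Arguments. Unset Strict Implicit. Unset Printing Implicit Defensive.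
Local Open Scope fset_scope.

(* Single-particle quantum states are indexed by nat (eps_0, eps_1, ...).
   An occupation configuration (= exponent vector of a monomial
   x_0^{n_0} x_1^{n_1} ... with x_i = e^{-beta eps_i}) is a finitely
   supported function nat -> nat. *)
Definition mono := {fsfun nat -> nat with 0%N}.

Definition num_particles (n : mono) : nat := \sum_(i <- finsupp n) n i.

Definition shape (n : mono) : seq nat := [seq n i | i <- finsupp n].

Definition is_partition (N : nat) (l : seq nat) : bool :=
  [&& sorted geq l, all (fun x => 0 < x) l & sumn l == N].

Definition largest_part (l : seq nat) : nat := head 0 l.

(* Formal power series in the variables x_0, x_1, ... with nat coefficients,
   given by their coefficient function on monomials. *)
Definition fps := mono -> nat.

(* monomial symmetric function m_(lambda): the sum of all distinct monomials
   x_{i1}^{l1} x_{i2}^{l2} ... with distinct indices; its coefficient at the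
   monomial x^n is 1 iff the nonzero exponents of n are, as a multiset, the
   parts of lambda, and 0 otherwise. *)
Definition msym (l : seq nat) : fps := fun n => nat_of_bool (perm_eq (shape n) l).

(* A system of N identical particles is described by g : mono -> nat,
   g n = number of microstates with occupation configuration n.
   Its canonical partition function, as a (formal) series in the
   x_i = e^{-beta eps_i}, is  Z = sum_microstates prod_i x_i^{n_i}
   = sum_n g n x^n; i.e. its coefficient function is g. *)
Definition Zpart (g : mono -> nat) : fps := fun n => g n.

Definition max_occupation (g : mono -> nat) (q : nat) : Prop :=
  (exists n i, 0 < g n /\ n i = q) /\ (forall n i, 0 < g n -> n i <= q).

(* Main.v *)
Require Import Defs.
From mathcomp Require Import all_boot.
From mathcomp Require Import finmap.

Lemma sorted_head_max (l : seq nat) x :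
  sorted geq l -> x \in l -> x <= head 0 l.
Proof.
case: l => // a s /= Hp; rewrite inE => /orP [/eqP -> //|Hx].
have Htr : transitive geq by move=> y z w /= H1 H2; apply: leq_trans H2 H1.
have := order_path_min Htr Hp => /allP /(_ x Hx) //.
Qed.

Lemma msym_pos l n : 0 < msym l n -> perm_eq (Defs.shape n) l.
Proof. by rewrite /msym; case: (perm_eq _ _). Qed.

Theorem theorem2 (N q : nat) (lq : seq nat) (Is : seq (seq nat))
    (M : seq nat -> nat) (g : mono -> nat) :
  (forall n, 0 < g n -> num_particles n = N) ->
  is_partition N lq -> largest_part lq = q ->
  uniq Is ->
  (forall l, (l \in Is) = is_partition N l && (largest_part l <= q)) ->
  (forall n, Zpart g n = msym lq n + \sum_(l <- Is) M l * msym l n) ->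
  max_occupation g q.
Proof.
move=> _ Hlq Hq _ HIs HZ.
have key : forall l x, is_partition N l -> x \in l -> x <= largest_part l.
  by move=> l x /and3P [Hs _ _]; apply: sorted_head_max.
split.
  pose S := [fset i | i in iota 0 (size lq)]%fset.
  pose n : mono := [fsfun i in S => nth 0 lq i | 0%N].
  have nE : forall i, n i = nth 0 lq i.
    move=> i; rewrite fsfun_fun !inE /= mem_iota add0n.
    by case: ltnP => // H; rewrite nth_default.
  exists n, 0%N; split; last by rewrite nE -Hq; case: (lq).
  have Hperm : perm_eq (Defs.shape n) lq.
    rewrite /Defs.shape.
    have -> : lq = map n (iota 0 (size lq)).
      by rewrite -{1}(mkseq_nth 0 lq) /mkseq; apply: eq_map => i; rewrite nE.
    apply: perm_map; apply: uniq_perm; first exact: fset_uniq.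
      exact: iota_uniq.
    move=> i; rewrite mem_finsupp nE mem_iota add0n.
    case: ltnP => H; last by rewrite nth_default.
    case/and3P: Hlq => _ /allP Hall _.
    by rewrite -lt0n; apply: Hall; apply: mem_nth.
  by rewrite -[g n]/(Zpart g n) HZ /msym Hperm.
move=> n i Hg.
case: (posnP (n i)) => [->//|Hi].
have Hin : n i \in Defs.shape n.
  by apply: map_f; rewrite mem_finsupp -lt0n.
move: Hg; rewrite -[g n]/(Zpart g n) HZ.
case: (posnP (msym lq n)) => [-> | H].
  rewrite add0n => Hs.
  have [l Hl Hpos] : exists2 l, l \in Is & 0 < M l * msym l n.
    apply/hasP; move: Hs; clear HIs HZ; elim: Is => [|a s IH]; first by rewrite big_nil.
    rewrite big_cons /= => H; case: (posnP (M a * msym a n)) => [E|P].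
      by rewrite E add0n in H; rewrite IH.
    by apply/orP; left.
  move: Hpos; rewrite muln_gt0 => /andP [_ /msym_pos Hp].
  move: Hl; rewrite HIs => /andP [Hpl Hlp].
  apply: leq_trans Hlp; apply: key Hpl _.
  by rewrite -(perm_mem Hp).
move=> _; rewrite -Hq; apply: key Hlq _.
by rewrite -(perm_mem (@msym_pos _ _ H)).
Qed.
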